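(* Let $\Sigma$ be a set, $A\in\mathrm{Abs}(\wp(\Sigma))$ with Galois insertion $(\alpha,\wp(\Sigma),A,\gamma)$, and $F$ a set of functions $f:\wp(\Sigma)^{\sharp(f)}\to\wp(\Sigma)$ with $\sharp(f)\ge1$. Let $\mathcal{L}_{A,F}$ be the language with atoms the elements $a\in A$ and operators the elements of $F$, with semantic structure $\mathcal{S}_{A,F}=(\Sigma,I)$ where $I(a)=\gamma(a)$ and $I(f)=f$. Assume $\mathcal{L}_{A,F}$ is closed under infinite logical conjunction. Then $\mathrm{AD}_{\mathcal{L}_{A,F}}=\mathcal{S}_F(A)$.
   Context: For a language $\mathcal{L}$ (formulae $\varphi::=p\mid f(\varphi_1,..,\varphi_n)$) with semantic structure $(\Sigma,I)$, the concrete semantics is $[\![p]\!]=I(p)$, $[\![f(\varphi_1,..,\varphi_n)]\!]=I(f)([\![\varphi_1]\!],..,[\![\varphi_n]\!])$. $\mathcal{L}$ is closed under infinite logical conjunction if for every $\Phi\subseteq\mathcal{L}$ (including $\varnothing$) there is $\psi$ with $[\![\psi]\!]=\bigcap_{\varphi\in\Phi}[\![\varphi]\!]$ (empty intersection $=\Sigma$). $\mathrm{AD}_{\mathcal{L}}$ is the abstract domain (upper closure operator on $\wp(\Sigma)$) whose image is the set of intersections of subfamilies of $\{[\![\varphi]\!]\mid\varphi\in\mathcal{L}\}$. Abstract domains of $\wp(\Sigma)$ are given by Galois insertions $(\alpha,\wp(\Sigma),A,\gamma)$ and identified with their closures $\gamma\circ\alpha$, ordered pointwise ($\sqsubseteq$: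 more precise). A closure $\rho$ is forward complete for $f$ if $f(\rho(X_1),..,\rho(X_n))=\rho(f(\rho(X_1),..,\rho(X_n)))$ for all $X_i$; $\mathcal{S}_F(A)$, the forward $F$-complete shell of $A$, is the most abstract closure $\rho\sqsubseteq\gamma\circ\alpha$ that is forward complete for every $f\in F$. *)

(* Defs.v *)
From mathcomp Require Import all_boot.
Set Implicit Arguments. Unset Strict Implicit. Unset Printing Implicit Defensive.

Definition subs (S : Type) (X Y : S -> Prop) : Prop := forall x, X x -> Y x.

Definition galois_insertion (S A : Type) (leA : A -> A -> Prop)
  (alpha : (S -> Prop) -> A) (gamma : A -> (S -> Prop)) : Prop :=
  [/\ (forall a, leA a a),
      (forall a b c, leA a b -> leA b c -> leA a c),
      (forall a b, leA a b -> leA b a -> a = b),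
      (forall X a, leA (alpha X) a <-> subs X (gamma a))
    & (forall a, alpha (gamma a) = a)].

Definition uco (S : Type) (rho : (S -> Prop) -> (S -> Prop)) : Prop :=
  [/\ (forall X Y, subs X Y -> subs (rho X) (rho Y)),
      (forall X, subs X (rho X))
    & (forall X, rho (rho X) = rho X)].

Definition more_precise (S : Type) (rho1 rho2 : (S -> Prop) -> (S -> Prop)) :=
  forall X, subs (rho1 X) (rho2 X).

Definition fwd_complete (S : Type) (rho : (S -> Prop) -> (S -> Prop)) (n : nat)
  (f : ('I_n -> (S -> Prop)) -> (S -> Prop)) : Prop :=
  forall Xs : 'I_n -> (S -> Prop),
    f (fun i => rho (Xs i)) = rho (f (fun i => rho (Xs i))).

(* F is given by an index type Fidx, arities ar and functions op. *)
Definition is_fwd_shell (S : Type) (Fidx : Type) (ar : Fidx -> nat)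
  (op : forall i, ('I_(ar i) -> (S -> Prop)) -> (S -> Prop))
  (rho rho' : (S -> Prop) -> (S -> Prop)) : Prop :=
  [/\ uco rho', more_precise rho' rho,
      (forall i, fwd_complete rho' (op i))
    & (forall eta, uco eta -> more_precise eta rho ->
         (forall i, fwd_complete eta (op i)) -> more_precise eta rho')].

Inductive form (A Fidx : Type) (ar : Fidx -> nat) : Type :=
  | Atom : A -> form A ar
  | Op : forall i : Fidx, ('I_(ar i) -> form A ar) -> form A ar.
Arguments Atom {A Fidx ar} _.
Arguments Op {A Fidx ar} i _.

Fixpoint sem (S A Fidx : Type) (ar : Fidx -> nat) (gamma : A -> (S -> Prop))
  (op : forall i, ('I_(ar i) -> (S -> Prop)) -> (S -> Prop))
  (phi : form A ar) : S -> Prop :=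
  match phi with
  | Atom a => gamma a
  | Op i args => op i (fun j => sem gamma op (args j))
  end.

(* closure under infinite logical conjunction (empty intersection = S) *)
Definition closed_inf_conj (S A Fidx : Type) (ar : Fidx -> nat)
  (gamma : A -> (S -> Prop))
  (op : forall i, ('I_(ar i) -> (S -> Prop)) -> (S -> Prop)) : Prop :=
  forall Phi : form A ar -> Prop, exists psi : form A ar,
    sem gamma op psi = (fun x => forall phi, Phi phi -> sem gamma op phi x).

(* AD_L: the uco whose image is the set of intersections of subfamilies of
   {[[phi]]}: X |-> intersection of all [[phi]] containing X. *)
Definition AD (S A Fidx : Type) (ar : Fidx -> nat) (gamma : A -> (S -> Prop))
  (op : forall i, ('I_(ar i) -> (S -> Prop)) -> (S -> Prop))
  : (S -> Prop) -> (S -> Prop) :=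
  fun X x => forall phi : form A ar, subs X (sem gamma op phi) -> sem gamma op phi x.

(* Main.v *)
Require Import Defs.
From mathcomp Require Import all_boot.
From Stdlib Require Import ClassicalEpsilon FunctionalExtensionality PropExtensionality.

Lemma pext (S : Type) (X Y : S -> Prop) : subs X Y -> subs Y X -> X = Y.
Proof.
move=> h1 h2; apply: functional_extensionality => x.
apply: propositional_extensionality; split; [exact: h1|exact: h2].
Qed.

Theorem theorem6p5 (S A : Type) (leA : A -> A -> Prop)
  (alpha : (S -> Prop) -> A) (gamma : A -> (S -> Prop))
  (Fidx : Type) (ar : Fidx -> nat)
  (op : forall i, ('I_(ar i) -> (S -> Prop)) -> (S -> Prop)) :
  galois_insertion leA alpha gamma ->
  (forall i, 0 < ar i) ->
  closed_inf_conj gamma op ->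
  is_fwd_shell op (fun X => gamma (alpha X)) (AD gamma op).
Proof.
case=> refl _ _ gc ag _ cl.
have ext : forall X, subs X (AD gamma op X) by move=> X x Xx phi h; exact: h.
have fix_sem : forall phi, AD gamma op (sem gamma op phi) = sem gamma op phi.
  move=> phi; apply: pext; last exact: ext.
  by move=> x h; apply: h.
have ADsem : forall X, exists psi, AD gamma op X = sem gamma op psi.
  move=> X; have [psi Hpsi] := cl (fun phi => subs X (sem gamma op phi)).
  by exists psi; rewrite Hpsi.
split.
- split.
  + by move=> X Y XY x h phi Yphi; apply: h => y /XY; apply: Yphi.
  + exact: ext.
  + move=> X; apply: pext; last exact: ext.
    move=> x h phi Xphi; apply: h => y hy; exact: hy.
- move=> X x h; apply: (h (Atom (alpha X))) => /=.
  by apply/gc; apply: refl.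
- move=> i Xs.
  pose psi j := proj1_sig (constructive_indefinite_description _ (ADsem (Xs j))).
  have Hpsi : (fun j => AD gamma op (Xs j)) = (fun j => sem gamma op (psi j)).
    apply: functional_extensionality => j.
    exact: (proj2_sig (constructive_indefinite_description _ (ADsem (Xs j)))).
  rewrite Hpsi.
  have -> : op i (fun j => sem gamma op (psi j)) = sem gamma op (Op i psi) by [].
  by rewrite fix_sem.
- move=> eta [mon ext' idem] prec fc X.
  have key : forall phi, eta (sem gamma op phi) = sem gamma op phi.
    elim=> [a|i args IH] /=.
    + apply: pext; last exact: ext'.
      by move=> x /prec; rewrite ag.
    + have E : (fun j => sem gamma op (args j)) = (fun j => eta (sem gamma op (args j))).
        by apply: functional_extensionality => j; rewrite IH.
      by rewrite E -fc.
  move=> x h phi Xphi.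
  by rewrite -key; apply: (mon _ _ Xphi).
Qed.
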